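(* Let $n=2k+1\geq 5$ be an odd integer. Then $\beta_1^s(J_n)\leq 6$.
   Context: Flower snark $J_n$ ($n\geq 5$ odd): take $n$ disjoint stars $K_{1,3}$, the $i$th with vertices $T_i=\{a_i,b_i,c_i,d_i\}$, centre $b_i$ and leaves $a_i,c_i,d_i$; add the cycle $a_1a_2\cdots a_na_1$ and the cycle $c_1c_2\cdots c_nd_1d_2\cdots d_nc_1$. $d$ is the shortest-path distance, $d(s,X)=\min_{x\in X}d(s,x)$ for nonempty $X$, $\mathcal{D}_S(X)=(d(s_1,X),\dots,d(s_k,X))$. $S$ is a $1$-solid-resolving set if $\mathcal{D}_S(X)\neq\mathcal{D}_S(Y)$ for all distinct nonempty vertex sets $X,Y$ with $|X|\leq 1$ ($Y$ of arbitrary size); $\beta_1^s(J_n)$ is the minimum size of such a set. *)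

(* Defs.v *)
From mathcomp Require Import all_boot.
Set Implicit Arguments. Unset Strict Implicit. Unset Printing Implicit Defensive.

(* Vertices of the flower snark J_n: (i, t) with i : 'I_n (0-indexed star
   number) and t : 'I_4 the role: 0 = a_i, 1 = b_i (centre), 2 = c_i, 3 = d_i. *)
Definition fvert (n : nat) := ('I_n * 'I_4)%type.

Definition fsnark_arc (n : nat) (u v : fvert n) : bool :=
  let i := nat_of_ord u.1 in let t := nat_of_ord u.2 in
  let j := nat_of_ord v.1 in let s := nat_of_ord v.2 in
  [||
      [&& t == 1, (s == 0) || (s == 2) || (s == 3) & j == i],
      [&& t == 0, s == 0 & j == (i.+1 %% n)],
      (* big cycle c_1 ... c_n d_1 ... d_n c_1 *)
      [&& t == 2, s == 2, i.+1 < n & j == i.+1],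
      [&& t == 2, s == 3, i == n.-1 & j == 0],
      [&& t == 3, s == 3, i.+1 < n & j == i.+1]
    | [&& t == 3, s == 2, i == n.-1 & j == 0] ].

Definition fsnark_adj (n : nat) : rel (fvert n) :=
  fun u v => fsnark_arc u v || fsnark_arc v u.

(* Shortest-path distance: least k such that a walk of length k from x to y
   exists (defaulting to #|V| if none, which never happens in J_n). *)
Definition fdist (n : nat) (x y : fvert n) : nat :=
  \big[minn/#|{: fvert n}|]_(k < #|{: fvert n}| |
      [exists p : k.-tuple (fvert n), path (@fsnark_adj n) x p && (last x p == y)])
    (k : nat).

(* d(s, X) = min_{x in X} d(s, x) (used only for nonempty X). *)
Definition fdistset (n : nat) (s : fvert n) (X : {set fvert n}) : nat :=
  \big[minn/#|{: fvert n}|]_(x in X) fdist s x.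

Definition one_solid_resolving (n : nat) (S : {set fvert n}) : bool :=
  [forall X : {set fvert n}, forall Y : {set fvert n},
    [&& X != set0, Y != set0, X != Y & #|X| <= 1] ==>
    [exists s in S, fdistset s X != fdistset s Y]].

Definition beta1s (n : nat) : nat :=
  \big[minn/#|{: fvert n}|]_(S : {set fvert n} |
      one_solid_resolving S) #|S|.

(* Main.v *)
Require Import Defs.
From mathcomp Require Import all_boot zify.

Section Gen.
Variable n : nat.

Lemma adj_sym (u v : fvert n) : fsnark_adj u v = fsnark_adj v u.
Proof. by rewrite /fsnark_adj orbC. Qed.

Lemma lip_path (f : fvert n -> nat) s p :
  (forall u v, fsnark_adj u v -> f u <= (f v).+1) ->
  path (@fsnark_adj n) s p -> f (last s p) <= f s + size p.
Proof.
move=> hL; elim: p s => [|a p IH] s /=; first by rewrite addn0.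
case/andP=> hsa hp. have h1 := IH a hp. rewrite adj_sym in hsa.
have h2 := hL a s hsa. lia.
Qed.

Lemma desc_path (f : fvert n -> nat) s : (forall v, f v = 0 -> v = s) ->
  (forall v, 0 < f v -> exists w, fsnark_adj w v /\ (f w).+1 = f v) ->
  forall m v, f v = m -> exists p : seq (fvert n),
    [/\ size p = m, path (@fsnark_adj n) s p & last s p = v].
Proof.
move=> h0 hD; elim=> [|m IH] v hv.
  by exists [::]; rewrite (h0 v hv).
have [w [hwv hw]] : exists w, fsnark_adj w v /\ (f w).+1 = f v by apply: hD; rewrite hv.
have [p [hs hp hl]] : exists p : seq (fvert n),
    [/\ size p = m, path (@fsnark_adj n) s p & last s p = w].
  by apply: IH; move: hw; rewrite hv => -[].
exists (rcons p v); rewrite size_rcons hs rcons_path hp last_rcons hl hwv.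
by split.
Qed.

Lemma bigmin_le (I : finType) (P : pred I) (F : I -> nat) d i0 :
  P i0 -> \big[minn/d]_(i | P i) F i <= F i0.
Proof.
move=> hP.
suff H : forall r, i0 \in r -> \big[minn/d]_(i <- r | P i) F i <= F i0.
  by apply: H; rewrite mem_index_enum.
elim=> [|a r IH] //; rewrite in_cons big_cons => /orP [/eqP <-|hr].
  by rewrite hP geq_minl.
case: ifP => _; last exact: IH.
by rewrite geq_min IH ?orbT.
Qed.

Lemma fdist_eq (f : fvert n -> nat) s : f s = 0 -> (forall v, f v = 0 -> v = s) ->
  (forall u v, fsnark_adj u v -> f u <= (f v).+1) ->
  (forall v, 0 < f v -> exists w, fsnark_adj w v /\ (f w).+1 = f v) ->
  (forall v, f v < #|{: fvert n}|) ->
  forall v, fdist s v = f v.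
Proof.
move=> hs0 h0 hL hD hB v; rewrite /fdist.
apply/eqP; rewrite eqn_leq; apply/andP; split.
- have [p [hs hp hl]] := @desc_path f s h0 hD _ v erefl.
  apply: (@bigmin_le _ _ (fun k : 'I__ => nat_of_ord k) _ (Ordinal (hB v))) => /=.
  apply/existsP; move: hp hl; rewrite -hs => hp hl.
  by exists (in_tuple p); rewrite hp hl eqxx.
- apply: (big_ind (fun x => f v <= x)).
  + exact: ltnW (hB v).
  + by move=> x y hx hy; rewrite leq_min hx hy.
  + move=> i /existsP [p /andP [hp /eqP hl]].
    have := @lip_path f s p hL hp. by rewrite hl hs0 size_tuple.
Qed.
End Gen.
Definition ad (x y : nat) := if x <= y then y - x else x - y.
Definition cd (M x y : nat) := if ad x y + ad x y <= M then ad x y else M - ad x y.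
Definition posn (N j t : nat) := if t == 3 then N + j else j.
Definition lvl (t : nat) := match t with 0 => 0 | 1 => 1 | _ => 2 end.
Definition FA (N i j t : nat) := cd N i j + lvl t.
Definition FB (N i j t : nat) :=
  if t == 1 then (if j == i then 0 else cd N i j + 2) else cd N i j + 1.
Definition cu (N i t0 j t : nat) := cd (N + N) (posn N i t0) (posn N j t).
Definition FC (N i t0 j t : nat) :=
  if t == 0 then cd N i j + 2 else if t == 1 then cd N i j + 1 else
  if cu N i t0 j t + cu N i t0 j t <= N + 2 then cu N i t0 j t else N + 2 - cu N i t0 j t.

Ltac split1 := match goal with
  | |- context[if ?c then _ else _] =>
      lazymatch c with context[if _ then _ else _] => fail | _ => idtac end;
      case: (boolP c) => /= ?
  end.
Ltac splitifs := repeat (split1; try (exfalso; lia)).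

Section Graph.
Variable m : nat.
Hypothesis hm : 2 <= m.
Local Notation N := m.+1.

Definition arcb (i t j s : nat) : bool :=
  [|| [&& t == 1, (s == 0) || (s == 2) || (s == 3) & j == i],
      [&& t == 0, s == 0 & j == (if i.+1 < N then i.+1 else 0)],
      [&& t == 2, s == 2, i.+1 < N & j == i.+1],
      [&& t == 2, s == 3, i == N.-1 & j == 0],
      [&& t == 3, s == 3, i.+1 < N & j == i.+1]
    | [&& t == 3, s == 2, i == N.-1 & j == 0] ].
Definition adjb i t j s := arcb i t j s || arcb j s i t.

Lemma modS i : i < N -> i.+1 %% N = if i.+1 < N then i.+1 else 0.
Proof.
move=> hi; case: ifP => h; first by rewrite modn_small.
have -> : i.+1 = N by lia. by rewrite modnn.
Qed.

Lemma adjE (u v : fvert N) : fsnark_adj u v = adjb u.1 u.2 v.1 v.2.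
Proof. by rewrite /fsnark_adj /fsnark_arc /adjb /arcb /= !modS. Qed.

Definition mk (j t : nat) : fvert N := (inord j, inord t).

Lemma mkE1 j t : j < N -> nat_of_ord (mk j t).1 = j.
Proof. by move=> h; rewrite /= inordK. Qed.
Lemma mkE2 j t : t < 4 -> nat_of_ord (mk j t).2 = t.
Proof. by move=> h; rewrite /= inordK. Qed.

Lemma vert_eq (v : fvert N) j t : nat_of_ord v.1 = j -> nat_of_ord v.2 = t -> v = mk j t.
Proof.
case: v => a b /= ha hb; congr pair; apply/val_inj; rewrite /= inordK //.
- by rewrite -ha ltn_ord.
- by rewrite -hb ltn_ord.
Qed.

Lemma dist_nat (F : nat -> nat -> nat) i0 t0 : i0 < N -> t0 < 4 -> F i0 t0 = 0 ->
  (forall j t, j < N -> t < 4 -> F j t = 0 -> j = i0 /\ t = t0) ->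
  (forall i t j s, i < N -> t < 4 -> j < N -> s < 4 -> adjb i t j s -> F i t <= (F j s).+1) ->
  (forall j t, j < N -> t < 4 -> 0 < F j t ->
     exists j' t', [/\ j' < N, t' < 4, adjb j' t' j t & (F j' t').+1 = F j t]) ->
  (forall j t, j < N -> t < 4 -> F j t < N * 4) ->
  forall v : fvert N, fdist (mk i0 t0) v = F v.1 v.2.
Proof.
move=> hi ht hF0 hz hL hD hB.
apply: (@fdist_eq _ (fun v : fvert N => F v.1 v.2)).
- by rewrite mkE1 // mkE2.
- move=> v hv; have [h1 h2] := hz _ _ (ltn_ord _) (ltn_ord _) hv; exact: vert_eq.
- move=> u v; rewrite adjE; apply: hL; exact: ltn_ord.
- move=> v hv; have [j' [t' [h1 h2 h3 h4]]] := hD _ _ (ltn_ord _) (ltn_ord _) hv.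
  by exists (mk j' t'); rewrite adjE !mkE1 // !mkE2.
- move=> v; rewrite card_prod !card_ord; exact: hB.
Qed.

End Graph.


Section Steps.
Variable m : nat.
Hypothesis hm : 2 <= m.
Local Notation N := m.+1.

Definition sc M x := if x.+1 < M then x.+1 else 0.
Definition pc M x := if x == 0 then M.-1 else x.-1.
Definition vj r := if r < N then r else r - N.
Definition vt r := if r < N then 2 else 3.

Lemma a_step j (P : nat -> Prop) : j < N -> P (sc N j) \/ P (pc N j) ->
  exists j', [/\ j' < N, adjb m j' 0 j 0 & P j'].
Proof.
move=> hj [h|h].
- exists (sc N j); split => //; rewrite /sc /adjb /arcb; splitifs; lia.
- exists (pc N j); split => //; rewrite /pc /adjb /arcb; splitifs; lia.
Qed.

Lemma b_step r (P : nat -> Prop) : r < N + N -> P (sc (N + N) r) \/ P (pc (N + N) r) ->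
  exists r', [/\ r' < N + N, adjb m (vj r') (vt r') (vj r) (vt r) & P r'].
Proof.
move=> hr [h|h].
- exists (sc (N + N) r); split => //; rewrite /sc /vj /vt /adjb /arcb; splitifs; lia.
- exists (pc (N + N) r); split => //; rewrite /pc /vj /vt /adjb /arcb; splitifs; lia.
Qed.
End Steps.

Ltac ct t := case: t => [|[|[|[|t]]]] //= _.

Section Dists.
Variable m : nat.
Hypothesis hm : 2 <= m.
Local Notation N := m.+1.

Lemma distA i : i < N -> forall v : fvert N, fdist (mk m i 0) v = FA N i v.1 v.2.
Proof.
move=> hi; apply: (@dist_nat m hm) => //.
- rewrite /FA /cd /ad /=; splitifs; lia.
- (move=> j t hj; ct t; rewrite /FA /cd /ad /=; splitifs; lia).
- (move=> i' t j s hi'; ct t; move=> hj; ct s; rewrite /adjb /arcb /FA /cd /ad /=; splitifs; lia).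
- (move=> j t hj; ct t; rewrite /FA /= => hpos).
  + have [j' [h1 h2 h3]] : exists j', [/\ j' < N, adjb m j' 0 j 0 & (cd N i j').+1 = cd N i j + 0].
      apply: (@a_step m hm j (fun j' => (cd N i j').+1 = cd N i j + 0) hj).
      move: hpos; rewrite /sc /pc /cd /ad; splitifs; lia.
    by exists j', 0; rewrite /FA /= addn0 h3.
  + by exists j, 0; split => //; rewrite ?addn0 /adjb /arcb /=; lia.
  + by exists j, 1; split => //; rewrite /adjb /arcb /=; lia.
  + by exists j, 1; split => //; rewrite /adjb /arcb /=; lia.
- (move=> j t hj; ct t; rewrite /FA /cd /ad /=; splitifs; lia).
Qed.

Ltac fin := rewrite /FA /FB /FC /cu /posn /vj /vt /sc /pc /adjb /arcb /cd /ad /=; splitifs; lia.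

Lemma distB i : i < N -> forall v : fvert N, fdist (mk m i 1) v = FB N i v.1 v.2.
Proof.
move=> hi; apply: (@dist_nat m hm) => //.
- by rewrite /FB /= eqxx.
- move=> j t hj; ct t; fin.
- move=> i' t j s hi'; ct t; move=> hj; ct s; fin.
- move=> j t hj; ct t => hpos.
  + case: (eqVneq j i) => [->|hji].
      by exists i, 1; split => //; fin.
    have [j' [h1 h2 h3]] : exists j', [/\ j' < N, adjb m j' 0 j 0 & (FB N i j' 0).+1 = FB N i j 0].
      apply: (@a_step m hm j (fun j' => (FB N i j' 0).+1 = FB N i j 0) hj).
      move: hpos hji; fin.
    by exists j', 0.
  + by exists j, 0; split => //; move: hpos; fin.
  + case: (eqVneq j i) => [->|hji].
      by exists i, 1; split => //; fin.
    have [r' [h1 h2 h3]] : exists r', [/\ r' < N + N, adjb m (vj m r') (vt m r') (vj m j) (vt m j)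
        & (FB N i (vj m r') (vt m r')).+1 = FB N i j 2].
      apply: (@b_step m hm j (fun r' => (FB N i (vj m r') (vt m r')).+1 = FB N i j 2)); first lia.
      move: hpos hji; fin.
    have e1 : vj m j = j by rewrite /vj; splitifs; lia.
    have e2 : vt m j = 2 by rewrite /vt; splitifs; lia.
    rewrite e1 e2 in h2.
    by exists (vj m r'), (vt m r'); split => //; move: h1; fin.
  + case: (eqVneq j i) => [->|hji].
      by exists i, 1; split => //; fin.
    have [r' [h1 h2 h3]] : exists r', [/\ r' < N + N, adjb m (vj m r') (vt m r') (vj m (N + j)) (vt m (N + j))
        & (FB N i (vj m r') (vt m r')).+1 = FB N i j 3].
      apply: (@b_step m hm (N + j) (fun r' => (FB N i (vj m r') (vt m r')).+1 = FB N i j 3)); first lia.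
      move: hpos hji; fin.
    have e1 : vj m (N + j) = j by rewrite /vj; splitifs; lia.
    have e2 : vt m (N + j) = 3 by rewrite /vt; splitifs; lia.
    rewrite e1 e2 in h2.
    by exists (vj m r'), (vt m r'); split => //; move: h1; fin.
- move=> j t hj; ct t; fin.
Qed.

Lemma distC i t0 : i < N -> (t0 == 2) || (t0 == 3) ->
  forall v : fvert N, fdist (mk m i t0) v = FC N i t0 v.1 v.2.
Proof.
move=> hi ht0; apply: (@dist_nat m hm) => //.
- lia.
- move: ht0; fin.
- move=> j t hj; ct t; move: ht0; fin.
- move=> i' t j s hi'; ct t; move=> hj; ct s; move: ht0; fin.
- move=> j t hj; ct t => hpos.
  + by exists j, 1; split => //; fin.
  + case: (boolP (cu N i t0 j 2 == cd N i j)) => e.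
      by exists j, 2; split => //; move: e ht0; fin.
    by exists j, 3; split => //; move: e ht0; fin.
  + case: (boolP (cu N i t0 j 2 + cu N i t0 j 2 <= N + 2)) => hc; last first.
      by exists j, 1; split => //; move: hc ht0; fin.
    have [r' [h1 h2 h3]] : exists r', [/\ r' < N + N, adjb m (vj m r') (vt m r') (vj m j) (vt m j)
        & (FC N i t0 (vj m r') (vt m r')).+1 = FC N i t0 j 2].
      apply: (@b_step m hm j (fun r' => (FC N i t0 (vj m r') (vt m r')).+1 = FC N i t0 j 2)); first lia.
      move: hpos hc ht0; fin.
    have e1 : vj m j = j by rewrite /vj; splitifs; lia.
    have e2 : vt m j = 2 by rewrite /vt; splitifs; lia.
    rewrite e1 e2 in h2.
    by exists (vj m r'), (vt m r'); split => //; move: h1; fin.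
  + case: (boolP (cu N i t0 j 3 + cu N i t0 j 3 <= N + 2)) => hc; last first.
      by exists j, 1; split => //; move: hc ht0; fin.
    have [r' [h1 h2 h3]] : exists r', [/\ r' < N + N, adjb m (vj m r') (vt m r') (vj m (N + j)) (vt m (N + j))
        & (FC N i t0 (vj m r') (vt m r')).+1 = FC N i t0 j 3].
      apply: (@b_step m hm (N + j) (fun r' => (FC N i t0 (vj m r') (vt m r')).+1 = FC N i t0 j 3)); first lia.
      move: hpos hc ht0; fin.
    have e1 : vj m (N + j) = j by rewrite /vj; splitifs; lia.
    have e2 : vt m (N + j) = 3 by rewrite /vt; splitifs; lia.
    rewrite e1 e2 in h2.
    by exists (vj m r'), (vt m r'); split => //; move: h1; fin.
- move=> j t hj; ct t; move: ht0; fin.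
Qed.

End Dists.


Definition d0 k j := if j <= k then j else 2*k+1-j.
Definition dk k j := if j <= k then k - j else j - k.
Definition dk1 k j := if j == 0 then k else if j <= k+1 then k+1-j else j-k-1.
Definition GA0 k j t := d0 k j + lvl t.
Definition GB0 k j t := match t with 1 => if j == 0 then 0 else d0 k j + 2 | _ => d0 k j + 1 end.
Definition GC0 k j t := match t with 0 => d0 k j + 2 | 1 => d0 k j + 1
  | 2 => if j <= k.+1 then j else 2*k+3-j | _ => if k <= j then 2*k+1-j else j+2 end.
Definition GAk k j t := dk k j + lvl t.
Definition GDk k j t := match t with 0 => dk k j + 2 | 1 => dk k j + 1
  | 2 => if j == 0 then k.+1 else if j < k then k+2-j else if j == 2*k then k.+1 else j-k+2
  | _ => dk k j end.
Definition GCk1 k j t := match t with 0 => dk1 k j + 2 | 1 => dk1 k j + 1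
  | 2 => if j <= k.+1 then k.+1-j else j-k.+1
  | _ => if j == 0 then k else if j == 1 then k.+1 else if j <= k.+1 then k+3-j else j-k+1 end.

Ltac cft t := move=> hk hj; case: t => [|[|[|[|t]]]] //= _;
  rewrite /FA /FB /FC /GA0 /GB0 /GC0 /GAk /GDk /GCk1 /d0 /dk /dk1 /cu /cd /ad /posn /lvl /=; splitifs; lia.

Lemma GA0E k j t : 2 <= k -> j < (2*k).+1 -> t < 4 -> FA (2*k).+1 0 j t = GA0 k j t.
Proof. cft t. Qed.
Lemma GB0E k j t : 2 <= k -> j < (2*k).+1 -> t < 4 -> FB (2*k).+1 0 j t = GB0 k j t.
Proof. cft t. Qed.
Lemma GC0E k j t : 2 <= k -> j < (2*k).+1 -> t < 4 -> FC (2*k).+1 0 2 j t = GC0 k j t.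
Proof. cft t. Qed.
Lemma GAkE k j t : 2 <= k -> j < (2*k).+1 -> t < 4 -> FA (2*k).+1 k j t = GAk k j t.
Proof. cft t. Qed.
Lemma GDkE k j t : 2 <= k -> j < (2*k).+1 -> t < 4 -> FC (2*k).+1 k 3 j t = GDk k j t.
Proof. cft t. Qed.
Lemma GCk1E k j t : 2 <= k -> j < (2*k).+1 -> t < 4 -> FC (2*k).+1 k.+1 2 j t = GCk1 k j t.
Proof. cft t. Qed.

Lemma sepG k jx tx jy ty : 2 <= k -> jx < (2*k).+1 -> jy < (2*k).+1 -> tx < 4 -> ty < 4 ->
  GA0 k jx tx <= GA0 k jy ty ->
  GB0 k jx tx <= GB0 k jy ty ->
  GC0 k jx tx <= GC0 k jy ty ->
  GAk k jx tx <= GAk k jy ty ->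
  GDk k jx tx <= GDk k jy ty ->
  GCk1 k jx tx <= GCk1 k jy ty ->
  jx = jy /\ tx = ty.
Proof.
move=> hk hx hy.
case: tx => [|[|[|[|tx]]]] //= _; case: ty => [|[|[|[|ty]]]] //= _;
  rewrite /GA0 /GB0 /GC0 /GAk /GDk /GCk1 /d0 /dk /dk1 /lvl /=.
- move=> h1 _ _ h4 _ h6; move: h1 h4 h6; splitifs; lia.
- move=> _ _ h3 _ h5 _; move: h3 h5; splitifs; lia.
- move=> _ h2 _ _ _ h6; move: h2 h6; splitifs; lia.
- move=> _ h2 _ _ h5 _; move: h2 h5; splitifs; lia.
- move=> h1 _ _ h4 _ _; move: h1 h4; splitifs; lia.
- move=> h1 _ _ h4 _ h6; move: h1 h4 h6; splitifs; lia.
- move=> _ h2 h3 _ _ h6; move: h2 h3 h6; splitifs; lia.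
- move=> _ h2 _ _ h5 _; move: h2 h5; splitifs; lia.
- move=> h1 _ _ h4 _ _; move: h1 h4; splitifs; lia.
- move=> h1 _ _ h4 _ _; move: h1 h4; splitifs; lia.
- move=> h1 _ h3 _ _ h6; move: h1 h3 h6; splitifs; lia.
- move=> h1 _ _ _ h5 _; move: h1 h5; splitifs; lia.
- move=> h1 _ _ h4 _ _; move: h1 h4; splitifs; lia.
- move=> h1 _ _ h4 _ _; move: h1 h4; splitifs; lia.
- move=> h1 _ h3 _ _ h6; move: h1 h3 h6; splitifs; lia.
- move=> h1 _ h3 h4 _ _; move: h1 h3 h4; splitifs; lia.
Qed.

Lemma fdist_le n (s x : fvert n) : fdist s x <= #|{: fvert n}|.
Proof.
rewrite /fdist; apply: (big_ind (fun v => v <= #|{: fvert n}|)) => //.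
- by move=> a b ha hb; rewrite geq_min ha.
- by move=> i _; apply: ltnW.
Qed.

Section Main.
Variable k : nat.
Hypothesis hk2 : 2 <= k.
Local Notation m := (2 * k).
Local Notation N := (2 * k).+1.

Definition S0 : {set fvert N} :=
  [set mk m 0 0; mk m 0 1; mk m 0 2; mk m k 0; mk m k 3; mk m k.+1 2].

Lemma hm : 2 <= m. Proof. lia. Qed.

Lemma sepV (x y : fvert N) : x != y -> exists2 s, s \in S0 & fdist s y < fdist s x.
Proof.
move=> hxy.
case: (ltnP (fdist (mk m 0 0) y) (fdist (mk m 0 0) x)) => h1.
  by exists (mk m 0 0); rewrite // !inE eqxx.
case: (ltnP (fdist (mk m 0 1) y) (fdist (mk m 0 1) x)) => h2.
  by exists (mk m 0 1); rewrite // !inE eqxx ?orbT.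
case: (ltnP (fdist (mk m 0 2) y) (fdist (mk m 0 2) x)) => h3.
  by exists (mk m 0 2); rewrite // !inE eqxx ?orbT.
case: (ltnP (fdist (mk m k 0) y) (fdist (mk m k 0) x)) => h4.
  by exists (mk m k 0); rewrite // !inE eqxx ?orbT.
case: (ltnP (fdist (mk m k 3) y) (fdist (mk m k 3) x)) => h5.
  by exists (mk m k 3); rewrite // !inE eqxx ?orbT.
case: (ltnP (fdist (mk m k.+1 2) y) (fdist (mk m k.+1 2) x)) => h6.
  by exists (mk m k.+1 2); rewrite // !inE eqxx ?orbT.
exfalso; move/negP: hxy; apply.
have hk0 : 0 < N by [].
have hkk : k < N by lia.
have hk1 : k.+1 < N by lia.
rewrite !(@distA m hm 0 hk0) in h1.
rewrite !(@distB m hm 0 hk0) in h2.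
rewrite !(@distC m hm 0 2 hk0 (isT : (2 == 2) || (2 == 3))) in h3.
rewrite !(@distA m hm k hkk) in h4.
rewrite !(@distC m hm k 3 hkk (isT : (3 == 2) || (3 == 3))) in h5.
rewrite !(@distC m hm k.+1 2 hk1 (isT : (2 == 2) || (2 == 3))) in h6.
have hx1 := ltn_ord x.1; have hx2 := ltn_ord x.2.
have hy1 := ltn_ord y.1; have hy2 := ltn_ord y.2.
rewrite !GA0E // in h1. rewrite !GB0E // in h2. rewrite !GC0E // in h3.
rewrite !GAkE // in h4. rewrite !GDkE // in h5. rewrite !GCk1E // in h6.
have [e1 e2] := @sepG k x.1 x.2 y.1 y.2 hk2 hx1 hy1 hx2 hy2 h1 h2 h3 h4 h5 h6.
apply/eqP; move: x y e1 e2 {hx1 hx2 hy1 hy2 h1 h2 h3 h4 h5 h6} => [x1 x2] [y1 y2] /= e1 e2.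
by congr pair; apply/val_inj.
Qed.

Lemma resS0 : one_solid_resolving S0.
Proof.
apply/forallP => X; apply/forallP => Y; apply/implyP => /and4P [hX hY hXY hc].
have [x hXx] : exists x, X = [set x].
  by apply/cards1P; rewrite eqn_leq hc card_gt0 hX.
have [y hyY hyx] : exists2 y, y \in Y & y != x.
  have : ~~ (Y \subset X).
    apply: contra hXY => hYX; rewrite eqEsubset hYX andbT hXx sub1set.
    case/set0Pn: hY => z hz; have := subsetP hYX z hz.
    by rewrite hXx in_set1 => /eqP <-.
  case/subsetPn => y hy hyX; exists y => //.
  by rewrite hXx in_set1 in hyX.
have hxy : x != y by rewrite eq_sym.
have [s hsS hlt] := @sepV x y hxy.
apply/existsP; exists s; rewrite hsS /=.
have h1 : fdistset s Y <= fdist s y.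
  exact: (@bigmin_le _ (fun z => z \in Y) (fun z => fdist s z) _ y hyY).
have h2 : fdist s x <= fdistset s X.
  rewrite hXx /fdistset; apply: (big_ind (fun v => fdist s x <= v)).
  - exact: fdist_le.
  - by move=> a b ha hb; rewrite leq_min ha.
  - by move=> z; rewrite in_set1 => /eqP ->.
apply/negP => /eqP e; lia.
Qed.

Lemma cardS0 : #|S0| <= 6.
Proof.
rewrite /S0.
do 5! (apply: leq_trans (leq_card_setU _ _) _; rewrite cards1 ?addn1 ?add1n ltnS).
by rewrite cards1.
Qed.

End Main.

Theorem mainTheorem18 (k : nat) (hk : 5 <= 2 * k + 1) :
  beta1s (2 * k + 1) <= 6.
Proof.
have hk2 : 2 <= k by lia.
rewrite addn1 /beta1s.
apply: (leq_trans _ (cardS0 k)).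
apply: bigmin_le.
exact: resS0.
Qed.
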